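(* Let $(J,\preccurlyeq)$ be a finite upper semilattice and let $F\colon J\to \mathrm{vect}_K$ be a functor such that $\mathrm{supp}(\beta^0F)$ is bounded below in $J$ (so that its meet $\bigwedge \mathrm{supp}(\beta^0 F)$ exists). Then for every $d\geq 1$, \[ \langle \mathrm{supp}(\beta^{d+1}F)\rangle \subseteq \langle \mathrm{supp}(\beta^{d}F)\rangle, \] that is, $\cdots\subseteq\langle \mathrm{supp}(\beta^{3}F)\rangle\subseteq\langle \mathrm{supp}(\beta^{2}F)\rangle\subseteq\langle \mathrm{supp}(\beta^{1}F)\rangle$.
   Context: $K$ is a field and $\mathrm{vect}_K$ is the category of finite-dimensional $K$-vector spaces; $\mathrm{Fun}(J,\mathrm{vect}_K)$ is the abelian category of functors $J\to\mathrm{vect}_K$ with natural transformations as morphisms. For $a\in J$, $K(a,-)\colon J\to\mathrm{vect}_K$ is the functor with $K(a,b)=K$ if $a\preccurlyeq b$ and $0$ otherwise, with identity transition maps between nonzero values (free on one generator in degree $a$). Every functor $F\colon J\to\mathrm{vect}_K$ has a minimal projective resolution $\cdots\to C_1\to C_0\to F\to 0$ (each $C_d\to\ker(C_{d-1}\to C_{d-2})$ a projective cover, $C_{-1}=F$, $C_{-2}=0$), unique up to isomorphism, with $C_d\cong\bigoplus_{a\in J}K(a,-)^{\beta^dF(a)}$ for uniquely determined numbers; the function $\beta^dF\colon J\to\mathbb N$ is the $d$-th Betti diagram of $F$, and $\mathrm{supp}(\beta^dF)=\{a\in J\mid \beta^dF(a)\neq0\}$. An upper semilattice is a poset in which every nonempty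 subset has a join $\bigvee$. For $S\subseteq J$, $\langle S\rangle:=\{\bigvee T\mid T\neq\varnothing,\ T\subseteq S\}$ is the smallest subset containing $S$ closed under joins of nonempty subsets. *)

(* Defs.v *)
From HB Require Import structures.
From mathcomp Require Import all_boot all_order all_algebra.
Set Implicit Arguments. Unset Strict Implicit. Unset Printing Implicit Defensive.
Import Order.TTheory GRing.Theory.

Local Open Scope order_scope.

Section PersistenceModules.
Variables (disp : Order.disp_t) (J : finPOrderType disp) (K : fieldType).

Definition is_lub (T : {set J}) (a : J) : Prop :=
  (forall x, x \in T -> x <= a) /\
  (forall b, (forall x, x \in T -> x <= b) -> a <= b).

Definition upper_semilattice : Prop :=
  forall T : {set J}, T != set0 -> exists a, is_lub T a.

Definition in_join_closure (S : {set J}) (a : J) : Prop :=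
  exists T : {set J}, [/\ T != set0, T \subset S & is_lub T a].

Definition supp (b : J -> nat) : {set J} := [set a | b a != 0%N].

(* A (candidate) functor J -> vect_K: the value at a is K^(fdim a) (row
   vectors), and the transition map a -> b is right multiplication by
   fmap a b (only meaningful when a <= b). *)
Record fdata := FData {
  fdim : J -> nat;
  fmap : forall a b : J, 'M[K]_(fdim a, fdim b) }.

Definition is_functor (F : fdata) : Prop :=
  (forall a, fmap F a a = 1%:M)%R /\
  (forall a b c, a <= b -> b <= c -> fmap F a c = (fmap F a b *m fmap F b c)%R).

Definition ntrans (F G : fdata) := forall a : J, 'M[K]_(fdim F a, fdim G a).

Definition natural (F G : fdata) (eta : ntrans F G) : Prop :=
  forall a b, a <= b -> (fmap F a b *m eta b = eta a *m fmap G a b)%R.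

Definition is_iso (F G : fdata) (eta : ntrans F G) : Prop :=
  natural eta /\
  exists theta : ntrans G F, natural theta /\
    forall a, (eta a *m theta a = 1%:M)%R /\ (theta a *m eta a = 1%:M)%R.

(* The free functor  (+)_{a in J} K(a,-)^{m a}.  Its generators are the pairs
   (a, i) with i < m a; its value at b has as basis the generators (a,i) with
   a <= b, and transition maps send each basis generator to itself. *)
Definition gens (m : J -> nat) := {a : J & 'I_(m a)}.

Definition gens_below (m : J -> nat) (b : J) : {set gens m} :=
  [set g : gens m | tag g <= b].

Definition free (m : J -> nat) : fdata :=
  @FData (fun b => #|gens_below m b|)
    (fun b c => \matrix_(i, j)
       ((enum_val i == enum_val j :> gens m)%:R : K))%R.

(* Target of the d-th differential: C_{-1} = F, C_{d-1} otherwise. *)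
Definition below (F : fdata) (C : nat -> fdata) (d : nat) : fdata :=
  match d with 0 => F | d'.+1 => C d' end.

(* beta is the sequence of Betti diagrams of F: there is a minimal projective
   resolution  ... -> C_1 -> C_0 -> F -> 0  with C_d iso to
   (+)_a K(a,-)^{beta d a}.  Minimality: C_d -> ker(C_{d-1} -> C_{d-2}) is a
   projective cover, i.e. an epimorphism (image of f_d = kernel of f_{d-1},
   resp. f_0 surjective) which is right minimal: every endomorphism h of C_d
   with f_d o h = f_d is an isomorphism. *)
Definition betti_diagrams (F : fdata) (beta : nat -> J -> nat) : Prop :=
  exists (C : nat -> fdata) (f : forall d, ntrans (C d) (below F C d)),
    [/\ (forall d, is_functor (C d)) /\ (forall d, natural (f d)),
        forall a, row_full (f 0%N a),
        forall d a, (f d.+1 a == kermx (f d a))%MS,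
        forall d (h : ntrans (C d) (C d)), natural h ->
          (forall a, h a *m f d a = f d a)%R -> is_iso h
      & forall d, exists eta : ntrans (C d) (free (beta d)), is_iso eta].

End PersistenceModules.

(* Main.v *)
Require Import Defs.
From HB Require Import structures.
From mathcomp Require Import all_boot all_order all_algebra.
Set Implicit Arguments. Unset Strict Implicit. Unset Printing Implicit Defensive.
Import Order.TTheory GRing.Theory.

Section Free.
Variables (disp : Order.disp_t) (J : finPOrderType disp) (K : fieldType).
Local Open Scope ring_scope.

Lemma freeE (m : J -> nat) b c i j :
  fmap (Defs.free K m) b c i j = ((enum_val i == enum_val j :> gens m)%:R).
Proof. by rewrite mxE. Qed.

Lemma ev_below (m : J -> nat) b (i : 'I_#|gens_below m b|) :
  (tag (enum_val i : gens m) <= b)%O.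
Proof. by have := enum_valP i; rewrite inE. Qed.

Lemma sum_ev (m : J -> nat) (A : {set gens m}) (x : gens m) (xA : x \in A)
   (F : 'I_#|A| -> K) :
  \sum_k ((x == enum_val k)%:R * F k) = F (enum_rank_in xA x).
Proof.
rewrite (bigD1 (enum_rank_in xA x)) //= enum_rankK_in // eqxx mul1r.
rewrite big1 ?addr0 // => k nk.
case: eqP => [ex|]; last by rewrite mul0r.
by case/eqP: nk; apply: enum_val_inj; rewrite -ex enum_rankK_in.
Qed.

Lemma sum_ev0 (m : J -> nat) (A : {set gens m}) (x : gens m) (xA : x \notin A)
   (F : 'I_#|A| -> K) :
  \sum_k ((x == enum_val k)%:R * F k) = 0.
Proof.
rewrite big1 // => k _; case: eqP => [ex|]; last by rewrite mul0r.
by move: xA; rewrite ex enum_valP.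
Qed.

Lemma free_comp (m : J -> nat) b c e : (b <= c)%O ->
  fmap (Defs.free K m) b e = fmap (Defs.free K m) b c *m fmap (Defs.free K m) c e.
Proof.
move=> bc; apply/matrixP => i j; rewrite !mxE.
have xA : (enum_val i : gens m) \in gens_below m c.
  by rewrite inE (le_trans (ev_below i) bc).
rewrite (eq_bigr (fun k => ((enum_val i == enum_val k :> gens m)%:R *
   ((enum_val k == enum_val j :> gens m)%:R : K)))); last by move=> k _; rewrite !mxE.
by rewrite (sum_ev xA) enum_rankK_in.
Qed.

Lemma free_id (m : J -> nat) b i j :
  fmap (Defs.free K m) b b i j = (i == j)%:R.
Proof.
by rewrite mxE (inj_eq enum_val_inj).
Qed.

Lemma free_rinv (m : J -> nat) b c : (b <= c)%O ->
  exists B, fmap (Defs.free K m) b c *m B = 1%:M.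
Proof.
move=> bc.
exists (\matrix_(k, i) ((enum_val k == enum_val i :> gens m)%:R : K)).
apply/matrixP => i i'; rewrite !mxE.
have xA : (enum_val i : gens m) \in gens_below m c.
  by rewrite inE (le_trans (ev_below i) bc).
rewrite (eq_bigr (fun k => ((enum_val i == enum_val k :> gens m)%:R *
   ((enum_val k == enum_val i' :> gens m)%:R : K)))); last by move=> k _; rewrite !mxE.
by rewrite (sum_ev xA) enum_rankK_in // (inj_eq enum_val_inj).
Qed.

Lemma free_linv (m : J -> nat) b c :
  (forall x : gens m, (tag x <= c)%O -> (tag x <= b)%O) ->
  exists P, P *m fmap (Defs.free K m) b c = 1%:M.
Proof.
move=> H.
exists (\matrix_(k, i) ((enum_val k == enum_val i :> gens m)%:R : K)).
apply/matrixP => k k'; rewrite !mxE.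
have xA : (enum_val k : gens m) \in gens_below m b.
  by rewrite inE H // ev_below.
rewrite (eq_bigr (fun i => ((enum_val k == enum_val i :> gens m)%:R *
   ((enum_val i == enum_val k' :> gens m)%:R : K)))); last by move=> i _; rewrite !mxE.
by rewrite (sum_ev xA) enum_rankK_in // (inj_eq enum_val_inj).
Qed.

Lemma free_idmx (m : J -> nat) b : fmap (Defs.free K m) b b = 1%:M.
Proof. by apply/matrixP => i j; rewrite free_id mxE. Qed.

Lemma mem_x0 (m : J -> nat) (x : gens m) : x \in gens_below m (tag x).
Proof. by rewrite inE. Qed.

Section Core.
Variables (m1 : J -> nat) (D E : fdata J K) (f' : ntrans D E).
Hypothesis natf : natural f'.
Hypothesis Hmin : forall h : ntrans D D, natural h ->
          (forall a, h a *m f' a = f' a) -> is_iso h.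
Variables (eta : ntrans D (Defs.free K m1)) (theta : ntrans (Defs.free K m1) D).
Hypotheses (nateta : natural eta) (nattheta : natural theta)
  (inv : forall a, eta a *m theta a = 1%:M /\ theta a *m eta a = 1%:M).

Let FR := Defs.free K m1.
Let phi : ntrans FR E := fun b => theta b *m f' b.

Lemma natphi : natural phi.
Proof.
move=> b c bc; rewrite /phi mulmxA nattheta // -mulmxA natf // mulmxA //.
Qed.

Variables (x0 : gens m1) (w : 'rV[K]_(#|gens_below m1 (tag x0)|)).
Let t := tag x0.
Let x0t : x0 \in gens_below m1 t := mem_x0 x0.
Let i0 := enum_rank_in x0t x0.
Hypotheses (w0 : w 0 i0 = 0) (wphi : w *m phi t = row i0 (phi t)).

Let h' : ntrans FR FR := fun b => \matrix_(i, k)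
  (if (enum_val i : gens m1) == x0 then (w *m fmap FR t b) 0 k
   else ((enum_val i == enum_val k :> gens m1)%:R)).

Lemma nath' : natural h'.
Proof.
move=> b c bc; apply/matrixP => i k; rewrite !mxE.
have xA : (enum_val i : gens m1) \in gens_below m1 c.
  by rewrite inE (le_trans (ev_below i) bc).
rewrite (eq_bigr (fun l => ((enum_val i == enum_val l :> gens m1)%:R *
   h' c l k))); last by move=> l _; rewrite !mxE.
rewrite (sum_ev xA) /h' mxE enum_rankK_in //.
case: eqP => [ei|nei].
  have tb : (t <= b)%O by rewrite /t -ei ev_below.
  rewrite (eq_bigr (fun l => (w *m fmap FR t b) 0 l * fmap FR b c l k));
    last by move=> l _; rewrite !mxE ei eqxx.
  by rewrite (@free_comp m1 t b c tb) mulmxA [LHS]mxE.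
rewrite (eq_bigr (fun l => ((enum_val i == enum_val l :> gens m1)%:R *
   ((enum_val l == enum_val k :> gens m1)%:R : K)))); last first.
  by move=> l _; rewrite !mxE; case: eqP.
have xB : (enum_val i : gens m1) \in gens_below m1 b by rewrite inE ev_below.
by rewrite (sum_ev xB) enum_rankK_in.
Qed.

Lemma h'phi b : h' b *m phi b = phi b.
Proof.
apply/matrixP => i k; rewrite !mxE.
case: (eqVneq (enum_val i : gens m1) x0) => [ei|nei].
  have tb : (t <= b)%O by rewrite /t -ei ev_below.
  rewrite (eq_bigr (fun l => (w *m fmap FR t b) 0 l * phi b l k));
    last by move=> l _; rewrite !mxE ei eqxx.
  transitivity ((w *m fmap FR t b *m phi b) 0 k); first by rewrite [RHS]mxE.
  rewrite -mulmxA (natphi tb) mulmxA wphi -row_mul mxE -(natphi tb) mxE.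
  rewrite (eq_bigr (fun l => ((enum_val i == enum_val l :> gens m1)%:R *
     phi b l k))); last first.
    have ei0 : enum_val i0 = x0 := enum_rankK_in x0t x0t.
    by move=> l _; rewrite !mxE ei0 ei.
  have xB : (enum_val i : gens m1) \in gens_below m1 b by rewrite inE ev_below.
  by rewrite (sum_ev xB) enum_valK_in /phi mxE.
rewrite (eq_bigr (fun l => ((enum_val i == enum_val l :> gens m1)%:R *
   phi b l k))); last by move=> l _; rewrite !mxE (negbTE nei).
have xB : (enum_val i : gens m1) \in gens_below m1 b by rewrite inE ev_below.
by rewrite (sum_ev xB) enum_valK_in /phi mxE.
Qed.

Lemma h'col l : h' t l i0 = 0.
Proof.
rewrite mxE; case: eqP => [el|nel].
  by rewrite free_idmx mulmx1.
by rewrite /i0 enum_rankK_in //; case: eqP.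
Qed.

Lemma core_false : False.
Proof.
pose h : ntrans D D := fun b => eta b *m h' b *m theta b.
have nath : natural h.
  move=> b c bc; rewrite /h !mulmxA nateta // -!mulmxA; congr (_ *m _).
  by rewrite !mulmxA nath' // -!mulmxA nattheta.
have hf a : h a *m f' a = f' a.
  rewrite /h -!mulmxA; have := h'phi a; rewrite /phi => ->.
  by rewrite mulmxA (proj1 (inv a)) mul1mx.
have [_ [th [_ thinv]]] := Hmin nath hf.
have [_ e1] := thinv t.
pose Y := theta t *m th t *m eta t.
have YE : Y *m h' t = 1%:M.
  have : theta t *m (th t *m h t) *m eta t = 1%:M.
    by rewrite e1 mulmx1 (proj2 (inv t)).
  by rewrite /h /Y !mulmxA -(mulmxA _ (theta t) (eta t)) (proj2 (inv t)) mulmx1.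
move/matrixP: YE => /(_ i0 i0); rewrite !mxE eqxx /=.
rewrite big1 => [/eqP|l _]; first by rewrite eq_sym oner_eq0.
by rewrite h'col mulr0.
Qed.

End Core.
Section Wex.
Variables (m1 mE mG : J -> nat) (D E G : fdata J K) (f' : ntrans D E) (g : ntrans E G).
Hypotheses (natf : natural f') (natg : natural g)
  (Hker : forall a, (f' a == kermx (g a))%MS).
Variables (etaD : ntrans D (Defs.free K m1)) (thetaD : ntrans (Defs.free K m1) D).
Hypotheses (natthD : natural thetaD)
  (invD : forall a, etaD a *m thetaD a = 1%:M).
Variables (etaE : ntrans E (Defs.free K mE)) (thetaE : ntrans (Defs.free K mE) E).
Hypotheses (natetaE : natural etaE)
  (invE : forall a, etaE a *m thetaE a = 1%:M /\ thetaE a *m etaE a = 1%:M).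
Variables (etaG : ntrans G (Defs.free K mG)) (thetaG : ntrans (Defs.free K mG) G).
Hypotheses (natetaG : natural etaG)
  (invG : forall a, etaG a *m thetaG a = 1%:M /\ thetaG a *m etaG a = 1%:M).

Let phi : ntrans (Defs.free K m1) E := fun b => thetaD b *m f' b.

Variables (x0 : gens m1).
Let t := tag x0.
Let x0t : x0 \in gens_below m1 t := mem_x0 x0.
Let i0 := enum_rank_in x0t x0.

Lemma fg0 a : f' a *m g a = 0.
Proof. by have := Hker a; case/andP => /sub_kermxP. Qed.

Lemma wA : (forall x : gens mE, (tag x <= t)%O -> False) ->
  exists w : 'rV_(#|gens_below m1 t|), w 0 i0 = 0 /\ w *m phi t = row i0 (phi t).
Proof.
move=> HA; exists 0; split; first by rewrite mxE.
set z := row i0 (phi t).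
have -> : z = z *m etaE t *m thetaE t by rewrite -mulmxA (proj1 (invE t)) mulmx1.
have -> : z *m etaE t = 0.
  apply/matrixP => i k; exfalso; exact: (HA _ (ev_below k)).
by rewrite !mul0mx.
Qed.

Lemma wB (j : J) : (j <= t)%O -> ~~ (t <= j)%O ->
  (forall x : gens mE, (tag x <= t)%O -> (tag x <= j)%O) ->
  exists w : 'rV_(#|gens_below m1 t|), w 0 i0 = 0 /\ w *m phi t = row i0 (phi t).
Proof.
move=> jt tj HB.
set z := row i0 (phi t).
have zg : z *m g t = 0.
  by rewrite /z -row_mul /phi -mulmxA fg0 mulmx0 row0.
have Ejt : fmap E j t = etaE j *m fmap (Defs.free K mE) j t *m thetaE t.
  by rewrite -natetaE // -mulmxA (proj1 (invE t)) mulmx1.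
have Gjt : fmap G j t = etaG j *m fmap (Defs.free K mG) j t *m thetaG t.
  by rewrite -natetaG // -mulmxA (proj1 (invG t)) mulmx1.
have [Pf PfE] := free_linv HB.
have [Bf BfE] := @free_rinv mG j t jt.
pose P := etaE t *m Pf *m thetaE j.
have PE : P *m fmap E j t = 1%:M.
  rewrite Ejt /P !mulmxA -(mulmxA _ (thetaE j)) (proj2 (invE j)) mulmx1.
  by rewrite -(mulmxA _ Pf) PfE mulmx1 (proj1 (invE t)).
pose B := etaG t *m Bf *m thetaG j.
have GB : fmap G j t *m B = 1%:M.
  rewrite Gjt /B !mulmxA -(mulmxA _ (thetaG t)) (proj2 (invG t)) mulmx1.
  by rewrite -(mulmxA _ (fmap _ j t)) BfE mulmx1 (proj1 (invG j)).
pose y := z *m P.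
have zy : z = y *m fmap E j t by rewrite /y -mulmxA PE mulmx1.
have yg : y *m g j = 0.
  have : y *m g j *m fmap G j t = 0 by rewrite -mulmxA -natg // mulmxA -zy.
  by move=> H; rewrite -[LHS]mulmx1 -GB mulmxA H mul0mx.
have : (y <= f' j)%MS.
  have := Hker j; case/andP => _ /(submx_trans _); apply; exact/sub_kermxP.
case/submxP => u yu.
pose u' := u *m etaD j.
exists (u' *m fmap (Defs.free K m1) j t); split.
  rewrite mxE big1 // => k _; rewrite freeE.
  have -> : (enum_val k == enum_val i0 :> gens m1) = false.
    rewrite (enum_rankK_in x0t x0t); apply/negP => /eqP ek.
    by move: (ev_below k); rewrite ek (negbTE tj).
  by rewrite mulr0.
rewrite -mulmxA.
have -> : fmap (Defs.free K m1) j t *m phi t = phi j *m fmap E j t.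
  by rewrite /phi mulmxA natthD // -mulmxA natf // mulmxA.
rewrite mulmxA /u' /phi -(mulmxA u) (mulmxA (etaD j)) invD mul1mx -yu.
by rewrite -zy.
Qed.

End Wex.
End Free.

Unset Implicit Arguments.

Theorem corollary4p2 (disp : Order.disp_t) (J : finPOrderType disp)
  (K : fieldType) (F : fdata J K) (beta : nat -> J -> nat) :
  upper_semilattice J ->
  is_functor F ->
  betti_diagrams F beta ->
  (exists m : J, forall a : J, a \in supp (beta 0%N) -> (m <= a)%O) ->
  forall d : nat, (1 <= d)%N ->
    forall a : J, in_join_closure (supp (beta d.+1)) a ->
                  in_join_closure (supp (beta d)) a.
Proof.
move=> usl _ [C [f [[funC natf] surj ker min iso]]] _ d d1.
case: d d1 => // d' _ a [T1 [T1n T1s T1lub]].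
pose Tt t := [set s | (s \in supp (beta d'.+1)) && (s <= t)%O].
have key : forall t, t \in supp (beta d'.+2) -> is_lub (Tt t) t /\ Tt t != set0.
  move=> t; rewrite inE -lt0n => ht.
  pose x0 := @Tagged J t (fun a => 'I_(beta d'.+2 a)) (Ordinal ht).
  have [etaD [natetaD [thetaD [natthD invD]]]] := iso d'.+2.
  have [etaE [natetaE [thetaE [natthE invE]]]] := iso d'.+1.
  have [etaG [natetaG [thetaG [natthG invG]]]] := iso d'.
  have gen_in : forall x : gens (beta d'.+1), (tag x <= t)%O -> tag x \in Tt t.
    move=> x hx; rewrite !inE hx andbT -lt0n.
    exact: leq_ltn_trans (leq0n _) (ltn_ord (tagged x)).
  case: (eqVneq (Tt t) set0) => [T0|Tn].
    exfalso.
    have HA : forall x : gens (beta d'.+1), (tag x <= tag x0)%O -> False.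
      by move=> x /gen_in; rewrite T0 inE.
    have [w [w0 wphi]] := wA (x0:=x0) (f d'.+2) thetaD invE HA.
    exact: (core_false (natf d'.+2) (min d'.+2) natetaD natthD invD w0 wphi).
  have [j [jub jl]] := usl (Tt t) Tn.
  case: (eqVneq j t) => [ej|jt].
    by subst j; split.
  exfalso.
  have jlt : (j <= tag x0)%O by apply: jl => x; rewrite inE => /andP[].
  have tj : ~~ (tag x0 <= j)%O.
    apply/negP => tj; case/eqP: jt; apply: le_anti; rewrite jlt; exact: tj.
  have HB : forall x : gens (beta d'.+1), (tag x <= tag x0)%O -> (tag x <= j)%O.
    by move=> x /gen_in /jub.
  have [w [w0 wphi]] := wB (x0:=x0) (natf d'.+2) (natf d'.+1) (ker d'.+1)
     natthD (fun a => proj1 (invD a)) natetaE invE natetaG invG jlt tj HB.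
  exact: (core_false (natf d'.+2) (min d'.+2) natetaD natthD invD w0 wphi).
have [t0 t0T1] := set0Pn _ T1n.
exists [set s | (s \in supp (beta d'.+1)) && (s <= a)%O]; split.
- have [_ Tn] := key t0 (subsetP T1s _ t0T1).
  have [s sT] := set0Pn _ Tn.
  apply/set0Pn; exists s; move: sT; rewrite !inE => /andP[-> st] /=.
  exact: le_trans st (proj1 T1lub _ t0T1).
- by apply/subsetP => s; rewrite inE => /andP[].
split; first by move=> x; rewrite inE => /andP[].
move=> b Hb; apply: (proj2 T1lub) => t tT1.
have [[_ tl] _] := key t (subsetP T1s _ tT1).
apply: tl => s; rewrite inE => /andP[ss st]; apply: Hb.
by rewrite inE ss (le_trans st (proj1 T1lub _ tT1)).
Qed.
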